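(* Let $Q=q-E$ where $E\in\mathbb R$ and $q$ is a real random variable, symmetric about $0$, with $\mathbb E[\log(1+q^2)]<\infty$, $\mathbb E[q^2]>0$, and such that the distribution of $q^2$ is not supported on a single point. Let $\zeta\in\mathbb C^+$ satisfy $|\zeta|>1$, $\operatorname{Re}(\zeta+1/\zeta+E)=0$ and $\mathbb E[\log|\alpha(\zeta,q-E)|^2]=0$. Then $$\inf_{w\in\mathbb R}\ \mathbb E\Big[\log\frac{|\zeta|^2\,|w+1/\zeta-Q|^2}{|w-\zeta|^2}\Big]>0.$$
   Context: For $a\in\mathbb R$, $b>0$ and real $Q$, $\alpha(a+bi,Q)=\frac1b\big(a+\frac{a}{a^2+b^2}-Q\big)+\frac{i}{a^2+b^2}$. *)

(* Defs.v *)
From HB Require Import structures.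
From mathcomp Require Import all_boot all_order all_algebra.
From mathcomp Require Import all_classical all_reals all_analysis.
From mathcomp Require Import complex.
Set Implicit Arguments. Unset Strict Implicit. Unset Printing Implicit Defensive.
Import Order.TTheory GRing.Theory Num.Theory.
Local Open Scope ring_scope.

Definition alpha (R : rcfType) (z : R[i]) (Q : R) : R[i] :=
  Complex ((complex.Re z + complex.Re z / (complex.Re z ^+ 2 + complex.Im z ^+ 2) - Q) / complex.Im z)
          (1 / (complex.Re z ^+ 2 + complex.Im z ^+ 2)).

Notation cmod := ComplexField.Normc.normc.

(* Main.v *)
Require Import Defs.
From HB Require Import structures.
From mathcomp Require Import all_boot all_order all_algebra.
From mathcomp Require Import all_classical all_reals all_analysis.
From mathcomp Require Import complex.
From mathcomp Require Import measurable_realfun.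
From mathcomp Require Import ring lra.
Import Order.TTheory GRing.Theory Num.Theory.
Local Open Scope classical_set_scope.
Local Open Scope ring_scope.

Section R1.
Variable R : realType.
Implicit Types x y : R.

Lemma ln_le_sub1 {x} : 0 < x -> ln x <= x - 1.
Proof. move=> x0; have := @le_ln1Dx R (x - 1); rewrite subrKC; apply; lra. Qed.

Lemma lnMp x y : 0 < x -> 0 < y -> ln (x * y) = ln x + ln y.
Proof. by move=> x0 y0; rewrite lnM// posrE. Qed.

Lemma lnVp x : 0 < x -> ln x^-1 = - ln x.
Proof. by move=> x0; rewrite lnV// posrE. Qed.

Lemma lndivp x y : 0 < x -> 0 < y -> ln (x / y) = ln x - ln y.
Proof. by move=> x0 y0; rewrite lnMp ?invr_gt0// lnVp. Qed.

Lemma ln_sq_le {x} : 0 < x -> ln x <= 2 * (Num.sqrt x - 1).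
Proof.
move=> x0; have s0 : 0 < Num.sqrt x by rewrite sqrtr_gt0.
have ex : x = Num.sqrt x * Num.sqrt x by rewrite -expr2 sqr_sqrtr// ltW.
rewrite {1}ex lnMp//.
have := ln_le_sub1 s0; lra.
Qed.

Lemma ln_gap (a p q : R) : 0 <= a <= 1 -> 0 < p -> 0 < q ->
  a * (1 - a) * (p - q) ^+ 2 / (2 * (p + q) * (a * p + (1 - a) * q))
  <= ln (a * p + (1 - a) * q) - a * ln p - (1 - a) * ln q.
Proof.
move=> /andP[a0 a1] p0 q0.
set m := a * p + (1 - a) * q.
have m0 : 0 < m by rewrite /m; nra.
have pm0 : 0 < p / m by rewrite divr_gt0.
have qm0 : 0 < q / m by rewrite divr_gt0.
have h1 := ln_sq_le pm0; have h2 := ln_sq_le qm0.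
rewrite !lndivp// in h1 h2.
set sp := Num.sqrt (p / m) in h1 *; set sq := Num.sqrt (q / m) in h2 *.
have sp0 : 0 <= sp by apply: sqrtr_ge0.
have sq0 : 0 <= sq by apply: sqrtr_ge0.
have esp : sp ^+ 2 = p / m by rewrite sqr_sqrtr// ltW.
have esq : sq ^+ 2 = q / m by rewrite sqr_sqrtr// ltW.
have hsum : a * sp ^+ 2 + (1 - a) * sq ^+ 2 = 1.
  by rewrite esp esq !mulrA -mulrDl divff// gt_eqF.
set S := a * sp + (1 - a) * sq.
have st1 : ln m - a * ln p - (1 - a) * ln q >= 2 - 2 * S.
  rewrite /S; nra.
have st2 : 2 - 2 * S >= 1 - S ^+ 2 by have := sqr_ge0 (1 - S); nra.
have st3 : 1 - S ^+ 2 = a * (1 - a) * (sp - sq) ^+ 2.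
  have -> : 1 - S ^+ 2 = a * (1 - a) * (sp - sq) ^+ 2 +
      (1 - (a * sp ^+ 2 + (1 - a) * sq ^+ 2)) by rewrite /S; ring.
  by rewrite hsum subrr addr0.
have pq : p = m * sp ^+ 2 by rewrite esp mulrC divfK// gt_eqF.
have qq : q = m * sq ^+ 2 by rewrite esq mulrC divfK// gt_eqF.
have st4 : (p - q) ^+ 2 / (2 * (p + q) * m) <= (sp - sq) ^+ 2.
  rewrite ler_pdivrMr; last by nra.
  rewrite pq qq.
  have : (sp ^+ 2 - sq ^+ 2) ^+ 2 <= (sp - sq) ^+ 2 * (2 * (sp ^+ 2 + sq ^+ 2)).
    have -> : (sp ^+ 2 - sq ^+ 2) ^+ 2 = (sp - sq) ^+ 2 * (sp + sq) ^+ 2 by ring.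
    apply: ler_wpM2l; first exact: sqr_ge0.
    have := sqr_ge0 (sp - sq); nra.
  have -> : (m * sp ^+ 2 - m * sq ^+ 2) ^+ 2 = m ^+ 2 * (sp ^+ 2 - sq ^+ 2) ^+ 2 by ring.
  have -> : (sp - sq) ^+ 2 * (2 * (m * sp ^+ 2 + m * sq ^+ 2) * m) =
     m ^+ 2 * ((sp - sq) ^+ 2 * (2 * (sp ^+ 2 + sq ^+ 2))) by ring.
  move=> H; apply: ler_wpM2l => //; exact: sqr_ge0.
have aa : 0 <= a * (1 - a) by nra.
have := ler_wpM2l aa st4.
rewrite !mulrA => H.
apply: le_trans H _.
rewrite st3 in st2; lra.
Qed.
End R1.

Section R2.
Variable R : realType.
Implicit Types x y b c u q k : R.

Definition alph (b u : R) := b ^+ 2 / (b ^+ 2 + u ^+ 2).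

Definition Tf (b c u q : R) :=
  (ln ((u - q) ^+ 2 + c ^+ 2) + ln ((u + q) ^+ 2 + c ^+ 2)) / 2 + ln b - ln c
  - ln (u ^+ 2 + b ^+ 2) - (alph b u - 1 / 2) * (ln (q ^+ 2 + c ^+ 2) - 2 * ln b).

Definition g1f (b c u q : R) :=
  ln ((q ^+ 2 + c ^+ 2) * ((u - q) ^+ 2 + c ^+ 2) * ((u + q) ^+ 2 + c ^+ 2) /
      (c ^+ 2 * (q ^+ 2 + c ^+ 2 + u ^+ 2) ^+ 2)).

Definition hf (b c u q : R) :=
  ln (alph b u * (q ^+ 2 + c ^+ 2) + (1 - alph b u) * b ^+ 2)
  - alph b u * ln (q ^+ 2 + c ^+ 2) - (1 - alph b u) * ln (b ^+ 2).

Lemma Tf_decomp b c u q : 0 < c -> 0 < b ->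
  Tf b c u q = g1f b c u q / 2 + hf b c u q.
Proof.
move=> c0 b0.
have x0 : 0 < q ^+ 2 + c ^+ 2 by have := sqr_ge0 q; have := exprn_gt0 2 c0; lra.
have y1 : 0 < (u - q) ^+ 2 + c ^+ 2 by have := sqr_ge0 (u - q); have := exprn_gt0 2 c0; lra.
have y2 : 0 < (u + q) ^+ 2 + c ^+ 2 by have := sqr_ge0 (u + q); have := exprn_gt0 2 c0; lra.
have xU : 0 < q ^+ 2 + c ^+ 2 + u ^+ 2 by have := sqr_ge0 u; lra.
have AU : 0 < b ^+ 2 + u ^+ 2 by have := sqr_ge0 u; have := exprn_gt0 2 b0; lra.
have c20 : 0 < c ^+ 2 by apply: exprn_gt0.
have b20 : 0 < b ^+ 2 by apply: exprn_gt0.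
rewrite /g1f /hf.
have -> : alph b u * (q ^+ 2 + c ^+ 2) + (1 - alph b u) * b ^+ 2 =
    b ^+ 2 * (q ^+ 2 + c ^+ 2 + u ^+ 2) / (b ^+ 2 + u ^+ 2).
  rewrite /alph; field; lra.
rewrite !lndivp ?mulr_gt0 ?exprn_gt0 // !lnMp ?mulr_gt0 ?exprn_gt0 //.
rewrite /Tf (addrC (u ^+ 2) (b ^+ 2)).
field.
by [].
Qed.


Lemma g1_eq b c u q : 0 < c ->
  (q ^+ 2 + c ^+ 2) * ((u - q) ^+ 2 + c ^+ 2) * ((u + q) ^+ 2 + c ^+ 2) /
      (c ^+ 2 * (q ^+ 2 + c ^+ 2 + u ^+ 2) ^+ 2) =
  1 + (q ^+ 2) * (q ^+ 2 + c ^+ 2 - u ^+ 2) ^+ 2 /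
      (c ^+ 2 * (q ^+ 2 + c ^+ 2 + u ^+ 2) ^+ 2).
Proof.
move=> c0.
have c20 : 0 < c ^+ 2 by apply: exprn_gt0.
have xU : 0 < q ^+ 2 + c ^+ 2 + u ^+ 2 by have := sqr_ge0 u; have := sqr_ge0 q; lra.
field; apply/andP; split; apply: lt0r_neq0 => //; exact: exprn_gt0.
Qed.

Lemma g1_lb b c u q k : 0 < c -> 0 <= k ->
  k * (c ^+ 2 * (q ^+ 2 + c ^+ 2 + u ^+ 2) ^+ 2) <=
    (q ^+ 2) * (q ^+ 2 + c ^+ 2 - u ^+ 2) ^+ 2 ->
  ln (1 + k) <= g1f b c u q.
Proof.
move=> c0 k0 H.
have c20 : 0 < c ^+ 2 by apply: exprn_gt0.
have xU : 0 < q ^+ 2 + c ^+ 2 + u ^+ 2 by have := sqr_ge0 u; have := sqr_ge0 q; lra.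
have D0 : 0 < c ^+ 2 * (q ^+ 2 + c ^+ 2 + u ^+ 2) ^+ 2 by rewrite mulr_gt0// exprn_gt0.
rewrite /g1f g1_eq//.
rewrite ler_ln ?posrE; first by rewrite lerD2l ler_pdivlMr.
- lra.
- have : 0 <= q ^+ 2 * (q ^+ 2 + c ^+ 2 - u ^+ 2) ^+ 2 / (c ^+ 2 * (q ^+ 2 + c ^+ 2 + u ^+ 2) ^+ 2).
    apply: divr_ge0; [apply: mulr_ge0; exact: sqr_ge0 | exact: ltW].
  lra.
Qed.

Lemma hf_lb b c u q : 0 < c -> 0 < b ->
  alph b u * (1 - alph b u) * (q ^+ 2 + c ^+ 2 - b ^+ 2) ^+ 2 /
   (2 * (q ^+ 2 + c ^+ 2 + b ^+ 2) *
    (alph b u * (q ^+ 2 + c ^+ 2) + (1 - alph b u) * b ^+ 2)) <= hf b c u q.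
Proof.
move=> c0 b0; rewrite /hf; apply: ln_gap.
- have AU : 0 < b ^+ 2 + u ^+ 2 by have := sqr_ge0 u; have := exprn_gt0 2 b0; lra.
  apply/andP; split; rewrite /alph; first by apply: divr_ge0; [exact: sqr_ge0|exact: ltW].
  by rewrite ler_pdivrMr // mul1r; have := sqr_ge0 u; lra.
- by have := sqr_ge0 q; have := exprn_gt0 2 c0; lra.
- exact: exprn_gt0.
Qed.

Lemma hf_ge0 b c u q : 0 < c -> 0 < b -> 0 <= hf b c u q.
Proof.
move=> c0 b0; apply: le_trans (hf_lb b c u q c0 b0).
have AU : 0 < b ^+ 2 + u ^+ 2 by have := sqr_ge0 u; have := exprn_gt0 2 b0; lra.
have a0 : 0 <= alph b u by rewrite /alph; apply: divr_ge0; [exact: sqr_ge0|exact: ltW].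
have a1 : alph b u <= 1 by rewrite /alph ler_pdivrMr // mul1r; have := sqr_ge0 u; lra.
have x0 : 0 < q ^+ 2 + c ^+ 2 by have := sqr_ge0 q; have := exprn_gt0 2 c0; lra.
have b20 := exprn_gt0 2 b0.
apply: divr_ge0; first by rewrite mulr_ge0 ?sqr_ge0 // mulr_ge0 // subr_ge0.
apply: mulr_ge0; first lra.
nra.
Qed.

Lemma g1_ge0 b c u q : 0 < c -> 0 <= g1f b c u q.
Proof.
move=> c0; rewrite -[X in X <= _]ln1 -[X in ln X](addr0 1).
apply: g1_lb => //; rewrite mul0r; apply: mulr_ge0; exact: sqr_ge0.
Qed.

Lemma Tf_ge0 b c u q : 0 < c -> 0 < b -> 0 <= Tf b c u q.
Proof.
move=> c0 b0; rewrite Tf_decomp//.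
have := g1_ge0 b c u q c0; have := hf_ge0 b c u q c0 b0; lra.
Qed.


Lemma frac_mono (N0 N D D0 : R) : 0 <= N0 -> N0 <= N -> 0 < D -> D <= D0 ->
  N0 / D0 <= N / D.
Proof.
move=> N00 N0N D0' DD0.
have D00 : 0 < D0 by apply: lt_le_trans DD0.
apply: ler_pM => //; first by rewrite invr_ge0 ltW.
by rewrite lef_pV2 ?posrE.
Qed.

Definition dlb (b c eta M : R) :=
  Num.min (ln (1 + (b ^+ 2 + eta - c ^+ 2) / (9 * c ^+ 2)) / 2)
    (b ^+ 2 * ((b ^+ 2 + eta) / 2) / (b ^+ 2 + 2 * M) ^+ 2 * eta ^+ 2 /
      (2 * (M + b ^+ 2) * M)).

Lemma dlb_gt0 b c eta M : 0 < c -> c < b -> 0 < eta -> b ^+ 2 + eta <= M ->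
  0 < dlb b c eta M.
Proof.
move=> c0 cb e0 bM.
have b0 : 0 < b by apply: lt_trans cb.
have c20 := exprn_gt0 2 c0; have b20 := exprn_gt0 2 b0.
have cb2 : c ^+ 2 < b ^+ 2 by rewrite ltr_pXn2r// ?nnegrE ltW.
rewrite /dlb lt_min; apply/andP; split.
  apply: divr_gt0 => //; apply: ln_gt0.
  rewrite ltrDl divr_gt0 //; [lra | nra].
apply: divr_gt0; last by nra.
apply: mulr_gt0; last exact: exprn_gt0.
apply: divr_gt0; last by apply: exprn_gt0; nra.
apply: mulr_gt0 => //; lra.
Qed.

Lemma Tf_lb b c eta M u q : 0 < c -> c < b -> 0 < eta ->
  b ^+ 2 + eta <= q ^+ 2 + c ^+ 2 <= M ->
  dlb b c eta M <= Tf b c u q.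
Proof.
move=> c0 cb e0 /andP[xl xM].
have b0 : 0 < b by apply: lt_trans cb.
have c20 := exprn_gt0 2 c0; have b20 := exprn_gt0 2 b0.
have cb2 : c ^+ 2 < b ^+ 2 by rewrite ltr_pXn2r// ?nnegrE ltW.
have g0 := g1_ge0 b c u q c0; have h0 := hf_ge0 b c u q c0 b0.
rewrite Tf_decomp//.
set x := q ^+ 2 + c ^+ 2 in xl xM *.
set U := u ^+ 2.
have U0 : 0 <= U by apply: sqr_ge0.
have [U1|U1] := leP U ((b ^+ 2 + eta) / 2).
  rewrite /dlb ge_min; apply/orP; left.
  suff : ln (1 + (b ^+ 2 + eta - c ^+ 2) / (9 * c ^+ 2)) <= g1f b c u q by lra.
  apply: g1_lb => //; first by apply: divr_ge0; [lra|nra].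
  rewrite -/x -/U.
  have h9 : (x + U) ^+ 2 <= 9 * (x - U) ^+ 2 by nra.
  have q2 : b ^+ 2 + eta - c ^+ 2 <= q ^+ 2 by rewrite /x in xl; lra.
  have -> : (b ^+ 2 + eta - c ^+ 2) / (9 * c ^+ 2) * (c ^+ 2 * (x + U) ^+ 2) =
     (b ^+ 2 + eta - c ^+ 2) * ((x + U) ^+ 2 / 9).
    by field; apply: lt0r_neq0.
  apply: ler_pM; [lra | by apply: divr_ge0; [exact: sqr_ge0|] | lra |].
  by rewrite ler_pdivrMr //; rewrite mulrC.
have [U2|U2] := leP (2 * M) U.
  rewrite /dlb ge_min; apply/orP; left.
  suff : ln (1 + (b ^+ 2 + eta - c ^+ 2) / (9 * c ^+ 2)) <= g1f b c u q by lra.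
  apply: g1_lb => //; first by apply: divr_ge0; [lra|nra].
  rewrite -/x -/U.
  have h9 : (x + U) ^+ 2 <= 9 * (x - U) ^+ 2 by nra.
  have q2 : b ^+ 2 + eta - c ^+ 2 <= q ^+ 2 by rewrite /x in xl; lra.
  have -> : (b ^+ 2 + eta - c ^+ 2) / (9 * c ^+ 2) * (c ^+ 2 * (x + U) ^+ 2) =
     (b ^+ 2 + eta - c ^+ 2) * ((x + U) ^+ 2 / 9).
    by field; apply: lt0r_neq0.
  apply: ler_pM; [lra | by apply: divr_ge0; [exact: sqr_ge0|] | lra |].
  by rewrite ler_pdivrMr //; rewrite mulrC.
rewrite /dlb ge_min; apply/orP; right.
suff : b ^+ 2 * ((b ^+ 2 + eta) / 2) / (b ^+ 2 + 2 * M) ^+ 2 * eta ^+ 2 /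
      (2 * (M + b ^+ 2) * M) <= hf b c u q by lra.
apply: le_trans (hf_lb b c u q c0 b0).
have AU : 0 < b ^+ 2 + U by lra.
have ea : alph b u * (1 - alph b u) = b ^+ 2 * U / (b ^+ 2 + U) ^+ 2.
  rewrite /alph -/U; field; lra.
have a0 : 0 <= alph b u by rewrite /alph; apply: divr_ge0; [exact: sqr_ge0|exact: ltW].
have a1 : alph b u <= 1 by rewrite /alph ler_pdivrMr // mul1r -/U; lra.
apply: frac_mono.
- apply: mulr_ge0; last exact: sqr_ge0.
  apply: divr_ge0; last exact: sqr_ge0.
  apply: mulr_ge0; lra.
- rewrite ea -/x; apply: ler_pM.
  + apply: divr_ge0; last exact: sqr_ge0. apply: mulr_ge0; lra.
  + exact: sqr_ge0.
  + apply: frac_mono; first by apply: mulr_ge0; lra.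
    * apply: ler_wpM2l; lra.
    * exact: exprn_gt0.
    * rewrite ler_pXn2r // ?nnegrE; lra.
  + rewrite ler_pXn2r // ?nnegrE; lra.
- rewrite -/x; apply: mulr_gt0; first lra.
  nra.
- rewrite -/x; apply: ler_pM; [lra | nra | lra | nra].
Qed.

End R2.

Section R3.
Variable R : realType.
Lemma ln_sq_bound (c w v k : R) : 0 < c ->
  `|k + ln ((w - v) ^+ 2 + c ^+ 2)| <=
   (`|k| + `|ln (c ^+ 2)| + ln (2 * w ^+ 2 + c ^+ 2 + 2)) + ln (1 + v ^+ 2).
Proof.
move=> c0.
have c20 := exprn_gt0 2 c0.
have w0 := sqr_ge0 w; have v0 := sqr_ge0 v; have wv0 := sqr_ge0 (w - v).
have l1 : 0 <= ln (1 + v ^+ 2) by apply: ln_ge0; lra.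
have l2 : 0 <= ln (2 * w ^+ 2 + c ^+ 2 + 2) by apply: ln_ge0; nra.
have lo : ln (c ^+ 2) <= ln ((w - v) ^+ 2 + c ^+ 2).
  by rewrite ler_ln ?posrE; lra.
have up : ln ((w - v) ^+ 2 + c ^+ 2) <= ln (2 * w ^+ 2 + c ^+ 2 + 2) + ln (1 + v ^+ 2).
  rewrite -lnMp; [|nra|lra].
  rewrite ler_ln ?posrE; [|lra|nra].
  have : (w - v) ^+ 2 <= 2 * w ^+ 2 + 2 * v ^+ 2 by have := sqr_ge0 (w + v); nra.
  nra.
have nk := normr_ge0 k; have nc := normr_ge0 (ln (c ^+ 2)).
have k1 := ler_norm k.
have c1 := ler_norm (ln (c ^+ 2)).
rewrite ler_norml; apply/andP; split.
- have := ler_norm (- k); rewrite normrN.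
  have := ler_norm (- ln (c ^+ 2)); rewrite normrN.
  lra.
- lra.
Qed.
End R3.
Arguments Tf {R}.
Arguments alph {R}.
Arguments dlb {R}.
Arguments g1f {R}.
Arguments hf {R}.
Arguments ln_sq_bound {R}.

Set Implicit Arguments. Unset Strict Implicit.

Section M1.
Context (R : realType) (d : measure_display) (T : measurableType d)
  (P : probability T R) (q : {RV P >-> R}).

Lemma mq (h : R -> R) : measurable_fun setT h ->
  measurable_fun setT (fun x => (h (q x))%:E).
Proof. by move=> mh; apply/measurable_EFinP; apply: measurableT_comp. Qed.

Lemma meas_lnsq (u c : R) : measurable_fun setT (fun v : R => ln ((u - v) ^+ 2 + c ^+ 2)).
Proof.
apply: measurableT_comp; first exact: measurable_ln.
apply: measurable_funD; last exact: measurable_cst.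
apply: measurable_funX; apply: measurable_funB; [exact: measurable_cst|exact: measurable_id].
Qed.

Hypothesis fin : (\int[P]_x (ln (1 + q x ^+ 2))%:E < +oo)%E.

Lemma I0 : P.-integrable setT (fun x => (ln (1 + q x ^+ 2))%:E).
Proof.
apply/integrableP; split.
  apply: (@mq (fun v => ln (1 + v ^+ 2))).
  apply: measurableT_comp; first exact: measurable_ln.
  apply: measurable_funD; first exact: measurable_cst.
  apply: measurable_funX; exact: measurable_id.
rewrite (eq_integral (fun x => (ln (1 + q x ^+ 2))%:E)) //.
by move=> x _; rewrite gee0_abs // lee_fin ln_ge0 // lerDl sqr_ge0.
Qed.

Lemma int_bound (h : R -> R) (C : R) : measurable_fun setT h ->
  (forall v, `|h v| <= C + ln (1 + v ^+ 2)) ->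
  P.-integrable setT (fun x => (h (q x))%:E).
Proof.
move=> mh hb.
apply: (@le_integrable _ _ _ _ _ measurableT _ (fun x => (C%:E + (ln (1 + q x ^+ 2))%:E)%E)).
- exact: mq.
- move=> x _ /=; rewrite lee_fin.
  apply: le_trans (hb (q x)) _.
  rewrite ger0_norm //.
  have := hb (q x); have := normr_ge0 (h (q x)); lra.
- apply: integrableD => //; last exact: I0.
  exact: finite_measure_integrable_cst.
Qed.

Hypothesis sym : forall A : set R, measurable A ->
  P (q @^-1` A) = P ((fun x => - q x) @^-1` A).

Lemma sym_int (h : R -> R) : measurable_fun setT h ->
  P.-integrable setT (fun x => (h (q x))%:E) ->
  P.-integrable setT (fun x => (h (- q x))%:E) ->
  (\int[P]_x (h (q x))%:E = \int[P]_x (h (- q x))%:E)%E.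
Proof.
move=> mh i1 i2.
have mq' : measurable_fun setT q by [].
have mnq : measurable_fun setT (fun x => - q x).
  by apply: measurable_funN.
have mh' : measurable_fun setT (EFin \o h) by apply/measurable_EFinP.
have i1' : P.-integrable (q @^-1` setT) ((EFin \o h) \o q) by rewrite preimage_setT.
have i2' : P.-integrable ((fun x => - q x) @^-1` setT) ((EFin \o h) \o (fun x => - q x)).
  by rewrite preimage_setT.
have e1 := @integral_pushforward _ _ T R R q mq' P setT (EFin \o h) mh' i1' measurableT.
have e2 := @integral_pushforward _ _ T R R _ mnq P setT (EFin \o h) mh' i2' measurableT.
rewrite preimage_setT in e1; rewrite preimage_setT in e2.
rewrite -[LHS]/(\int[P]_x ((EFin \o h) \o q) x)%E -e1.
rewrite -[RHS]/(\int[P]_x ((EFin \o h) \o (fun x => (- q x)%R)) x)%E -e2.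
apply: eq_measure_integral => A mA _.
exact: sym.
Qed.
End M1.

Section M2.
Context (R : realType) (d : measure_display) (T : measurableType d)
  (P : probability T R) (q : {RV P >-> R}).

Lemma mset_bool (f : T -> bool) : measurable_fun setT f -> measurable [set x | f x].
Proof.
move=> mf; have := mf measurableT [set true] I; rewrite setTI; exact.
Qed.

Lemma mqc (c : R) : measurable_fun setT (fun x => q x ^+ 2 + c ^+ 2).
Proof.
apply: measurable_funD; last exact: measurable_cst.
by apply: measurable_funX.
Qed.


Lemma meq (f : T -> R) (s : R) : measurable_fun setT f -> measurable [set x | f x = s].
Proof.
move=> mf.
have -> : [set x | f x = s] = [set x | f x == s].
  by apply/seteqP; split => x /= /eqP.
apply: mset_bool; apply: measurable_fun_eqr => //; exact: measurable_cst.
Qed.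

Hypothesis fin : (\int[P]_x (ln (1 + q x ^+ 2))%:E < +oo)%E.
Variables b c : R.
Hypotheses (c0 : 0 < c) (cb : c < b).
Let hk := fun v : R => - 2 * ln b + ln ((0 - v) ^+ 2 + c ^+ 2).
Hypothesis hK : (\int[P]_x (hk (q x))%:E = 0)%E.
Hypothesis npm : ~ (exists s : R, P [set x | q x ^+ 2 = s] = 1%E).

Lemma mhk : measurable_fun setT hk.
Proof. apply: measurable_funD; [exact: measurable_cst | exact: meas_lnsq]. Qed.

Lemma iK : P.-integrable setT (fun x => (hk (q x))%:E).
Proof. apply: (int_bound fin mhk) => v; exact: ln_sq_bound. Qed.

Lemma posS : (0 < P [set x | (b ^+ 2 < q x ^+ 2 + c ^+ 2)%R])%E.
Proof.
have b0 : 0 < b by apply: lt_trans cb.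
set N := [set x | b ^+ 2 < q x ^+ 2 + c ^+ 2].
have mN : measurable N.
  apply: mset_bool; apply: measurable_fun_ltr; [exact: measurable_cst | exact: mqc].
have mhkq : measurable_fun setT (fun x => (hk (q x))%:E) by apply: mq; exact: mhk.
rewrite measure_gt0; apply/negP => /eqP N0.
have x2c : forall x, 0 < q x ^+ 2 + c ^+ 2.
  by move=> x; have := sqr_ge0 (q x); have := exprn_gt0 2 c0; lra.
have hk_le : forall x, ~ N x -> hk (q x) <= 0.
  move=> x Nx; rewrite /hk sub0r sqrrN.
  have : q x ^+ 2 + c ^+ 2 <= b ^+ 2 by rewrite leNgt; apply/negP.
  rewrite -ler_ln ?posrE ?exprn_gt0 // lnXn //; lra.
have ae1 : ae_eq P setT (fun x => `|(hk (q x))%:E|%E) (fun x => ((-1) * hk (q x))%:E).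
  exists N; split => // x /=; apply: contra_notP => Nx _.
  by rewrite ler0_norm ?mulN1r // hk_le.
have mk : measurable_fun setT (fun x => ((-1) * hk (q x))%:E).
  apply/measurable_EFinP; apply: measurable_funM; first exact: measurable_cst.
  exact: measurableT_comp mhk _.
have e1 := ae_eq_integral (fun x => ((-1) * hk (q x))%:E)
   (fun x => `|(hk (q x))%:E|%E) measurableT
   (measurableT_comp (@abse_measurable _ _) mhkq)
   mk ae1.
have e2 : (\int[P]_x ((-1) * hk (q x))%:E = 0)%E.
  under eq_integral do rewrite EFinM.
  by rewrite integralZl //; [rewrite hK mule0 | exact: iK].
have ae2 := (@ae_eq_integral_abs _ _ _ P setT measurableT _ mhkq).1.
rewrite e1 e2 in ae2; have [N' [mN' PN' sub]] := ae2 erefl.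
apply: npm; exists (b ^+ 2 - c ^+ 2).
have mE : measurable [set x | q x ^+ 2 = b ^+ 2 - c ^+ 2].
  by apply: meq; apply: measurable_funX.
apply/eqP; rewrite eq_le probability_le1 //=.
have <- : P (~` N') = 1%E by rewrite probability_setC // PN' sube0.
apply: le_measure; rewrite ?inE //; first exact: measurableC.
move=> x /= N'x.
have hx : hk (q x) = 0.
  have : ~ (~` [set x | setT x -> (hk (q x))%:E = cst 0%E x]) x.
    by move=> /sub.
  move=> /contrapT /(_ I) /= [].
  done.
move: hx; rewrite /hk sub0r sqrrN.
have e : 2 * ln b = ln (b ^+ 2) by rewrite lnXn // mulr_natl.
move=> h; have : ln (q x ^+ 2 + c ^+ 2) = ln (b ^+ 2) by lra.
move/ln_inj; rewrite !posrE => /(_ (x2c x) (exprn_gt0 2 b0)); lra.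
Qed.

Lemma posS2 : exists eta M, [/\ 0 < eta, b ^+ 2 + eta <= M &
  (0 < P [set x | (b ^+ 2 + eta <= q x ^+ 2 + c ^+ 2 <= M)%R])%E].
Proof.
set F := fun n : nat => [set x | (b ^+ 2 + (n.+1%:R)^-1 <= q x ^+ 2 + c ^+ 2
   <= b ^+ 2 + n.+1%:R)%R].
have mF : forall n, measurable (F n).
  move=> n; apply: mset_bool; apply: measurable_and; apply: measurable_fun_ler;
    (exact: measurable_cst || exact: mqc).
have [n Hn] : exists n, (0 < P (F n))%E.
  case: (pselect (exists n, (0 < P (F n))%E)) => // H; exfalso.
  have H0 : forall n, P (F n) = 0.
    move=> n; apply/eqP; rewrite -measure_le0 leNgt; apply/negP => h.
    by apply: H; exists n.
  have := posS; apply/negP; rewrite -leNgt.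
  have sub : [set x | (b ^+ 2 < q x ^+ 2 + c ^+ 2)%R] `<=` \bigcup_n F n.
    move=> x /= bx.
    set y := q x ^+ 2 + c ^+ 2 - b ^+ 2.
    have y0 : 0 < y by rewrite /y; lra.
    have z0 : 0 <= y^-1 + y by have := invr_gt0 y; lra.
    have := archi_boundP z0; set m := Num.bound _ => hm.
    exists m => //=.
    have hm1 : (m%:R : R) < m.+1%:R by rewrite ltr_nat.
    have hy : y^-1 < m.+1%:R by have := invr_gt0 y; lra.
    apply/andP; split.
      have : (m.+1%:R : R)^-1 <= y.
        rewrite -[leRHS]invrK lef_pV2 ?posrE ?invr_gt0 //; first exact: ltW.
      by move=> h; move: h; rewrite lerBrDr addrC.
    have : y < m.+1%:R by have := invr_gt0 y; lra.
    rewrite /y; lra.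
  have mN : measurable [set x | (b ^+ 2 < q x ^+ 2 + c ^+ 2)%R].
    apply: mset_bool; apply: measurable_fun_ltr; [exact: measurable_cst | exact: mqc].
  have := measure_sigma_subadditive P mF mN sub.
  by rewrite eseries0 // => i _ _; exact: H0.
exists (n.+1%:R^-1), (b ^+ 2 + n.+1%:R); split.
- by rewrite invr_gt0 ltr0n.
- rewrite lerD2l; apply: (@le_trans _ _ 1); [rewrite invf_le1 ?ler1n // ltr0n | rewrite ler1n] => //.
- exact: Hn.
Qed.

Hypothesis sym : forall A : set R, measurable A ->
  P (q @^-1` A) = P ((fun x => - q x) @^-1` A).

Definition hF (u v : R) := (ln b - ln c - ln (u ^+ 2 + b ^+ 2)) + ln ((u - v) ^+ 2 + c ^+ 2).

Lemma hF_id u v : hF u v + hF u (- v) =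
  2 * Tf b c u v + (2 * alph b u - 1) * hk v.
Proof.
rewrite /hF /Tf /hk sub0r sqrrN opprK.
by field.
Qed.

Lemma core : exists2 dl : R, 0 < dl &
  forall u, (dl%:E <= \int[P]_x (hF u (q x))%:E)%E.
Proof.
have b0 : 0 < b by apply: lt_trans cb.
have [eta [M [e0 eM PS]]] := posS2.
set S := [set x | (b ^+ 2 + eta <= q x ^+ 2 + c ^+ 2 <= M)%R] in PS.
have mS : measurable S.
  apply: mset_bool; apply: measurable_and; apply: measurable_fun_ler;
    (exact: measurable_cst || exact: mqc).
have PS1 : (P S <= 1)%E by apply: probability_le1.
have PSf : P S \is a fin_num by rewrite ge0_fin_numE ?(le_lt_trans PS1) ?ltey // measure_ge0.
set pS := fine (P S).
have ePS : P S = pS%:E by rewrite fineK.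
have pS0 : 0 < pS by rewrite -lte_fin -ePS.
set dd := dlb b c eta M.
have dd0 : 0 < dd by apply: dlb_gt0.
exists (dd * pS); first exact: mulr_gt0.
move=> u.
have mh : measurable_fun setT (hF u).
  apply: measurable_funD; [exact: measurable_cst | exact: meas_lnsq].
have mh' : measurable_fun setT (fun v : R => hF u (- v)).
  apply: measurableT_comp => //; exact: measurable_funN.
have i1 : P.-integrable setT (fun x => (hF u (q x))%:E).
  apply: (int_bound fin mh) => v; exact: ln_sq_bound.
have i2 : P.-integrable setT (fun x => (hF u (- q x))%:E).
  apply: (int_bound fin mh') => v; rewrite /hF.
  have := ln_sq_bound c u (- v) (ln b - ln c - ln (u ^+ 2 + b ^+ 2)) c0.
  by rewrite sqrrN; apply.
have es := sym_int sym mh i1 i2.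
set I1 := (\int[P]_x (hF u (q x))%:E)%E in es *.
have I1f : I1 \is a fin_num by apply: integrable_fin_num.
set al := alph b u.
have iL : P.-integrable setT (fun x => ((2 * dd) * \1_S x + (2 * al - 1) * hk (q x))%:E).
  under eq_fun do rewrite EFinD !EFinM.
  apply: (integrableD measurableT); apply: (integrableZl measurableT).
    exact: integrable_indic.
  exact: iK.
have iU : P.-integrable setT (fun x => (hF u (q x) + hF u (- q x))%:E).
  under eq_fun do rewrite EFinD.
  exact: (integrableD measurableT).
have le := le_integral measurableT iL iU.
have : (((2 * dd) * pS)%:E <= I1 + I1)%E.
  have <- : (\int[P]_x ((2 * dd) * \1_S x + (2 * al - 1) * hk (q x))%:E)%E =
      ((2 * dd) * pS)%:E.
    under eq_integral do rewrite EFinD !EFinM.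
    have j0 := integrable_indic P mS.
    have j1 := integrableZl measurableT (2 * dd) j0.
    have j2 := integrableZl measurableT (2 * al - 1) iK.
    rewrite (integralD measurableT j1 j2).
    rewrite (integralZl measurableT j0) (integralZl measurableT iK).
    rewrite hK integral_indic // setIT mule0 adde0 [X in (_ * X)%E](_ : _ = pS%:E) //; exact: ePS.
  have -> : (I1 + I1 = \int[P]_x (hF u (q x) + hF u (- q x))%:E)%E.
    under eq_integral do rewrite EFinD.
    by rewrite (integralD measurableT) // -es.
  apply: le => x _.
  rewrite lee_fin hF_id lerD2r -mulrA ler_pM2l //.
  rewrite indicE; case: (boolP (x \in S)) => xS /=.
    rewrite mulr1; apply: Tf_lb => //.
    by move: xS; rewrite inE.
  by rewrite mulr0; apply: Tf_ge0.
rewrite -(fineK I1f) -EFinD lee_fin => h.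
rewrite -(fineK I1f) lee_fin.
lra.
Qed.
End M2.

Unset Implicit Arguments. Set Strict Implicit.
Lemma cmodE (R : rcfType) (z : R[i]) :
  cmod z = Num.sqrt (complex.Re z ^+ 2 + complex.Im z ^+ 2).
Proof. by case: z. Qed.

Lemma cmod2 (R : rcfType) (z : R[i]) :
  cmod z ^+ 2 = complex.Re z ^+ 2 + complex.Im z ^+ 2.
Proof. by rewrite cmodE sqr_sqrtr // addr_ge0 // sqr_ge0. Qed.

Theorem proposition5p3 (R : realType) (d : measure_display)
  (T : measurableType d) (P : probability T R) (q : {RV P >-> R})
  (En : R) (zeta : R[i]) :
  (* q symmetric about 0 : q and -q have the same distribution *)
  (forall A : set R, measurable A ->
     P (q @^-1` A) = P ((fun x => - q x) @^-1` A)) ->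
  (* E[log(1+q^2)] < oo *)
  (\int[P]_x (ln (1 + q x ^+ 2))%:E < +oo)%E ->
  (* E[q^2] > 0 *)
  (0 < \int[P]_x (q x ^+ 2)%:E)%E ->
  (* the law of q^2 is not a point mass *)
  ~ (exists c : R, P [set x | q x ^+ 2 = c] = 1%E) ->
  (* zeta in C^+, |zeta| > 1 *)
  0 < complex.Im zeta -> 1 < cmod zeta ->
  complex.Re (zeta + zeta^-1 + (En%:C)%C) = 0 ->
  (\int[P]_x (ln (cmod (alpha zeta (q x - En)) ^+ 2))%:E = 0)%E ->
  (0 < ereal_inf [set (\int[P]_x
        (ln (cmod zeta ^+ 2 * cmod ((w%:C)%C + zeta^-1 - ((q x - En)%:C)%C) ^+ 2
             / cmod ((w%:C)%C - zeta) ^+ 2))%:E)%E | w in [set: R]])%E.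
Proof.
move=> sym fin _ npm Im0 cm1 hRe hA.
move: Im0 cm1 hRe hA; case: zeta => a b /= b0 cm1 hRe hA.
set r2 := a ^+ 2 + b ^+ 2 in hRe hA *.
have r20 : 0 <= r2 by rewrite /r2 addr_ge0 // sqr_ge0.
have r21 : 1 < r2.
  have s0 := sqrtr_ge0 r2; have s2 := sqr_sqrtr r20.
  rewrite -s2; nra.
have r2p : 0 < r2 by lra.
set c := b / r2.
have c0 : 0 < c by rewrite divr_gt0.
have cb : c < b by rewrite /c ltr_pdivrMr // ltr_pMr.
have eEn : En = - a - a / r2 by lra.
have hK : (\int[P]_x ((fun v : R => -2 * ln (R:=R) b + ln (R:=R) ((0 - v) ^+ 2 + c ^+ 2)) (q x))%:E = 0)%E.
  rewrite -hA; apply: eq_integral => x _; congr EFin.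
  rewrite sqr_sqrtr; last by rewrite addr_ge0 // sqr_ge0.
  have x0 : 0 < q x ^+ 2 + c ^+ 2.
    by have := sqr_ge0 (q x); have := exprn_gt0 2 c0; lra.
  have -> : ((a + a / r2 - (q x - En)) / b) ^+ 2 + (1 / r2) ^+ 2 =
            (q x ^+ 2 + c ^+ 2) / b ^+ 2.
    rewrite eEn /c; field; apply/andP; split; apply: lt0r_neq0 => //.
  rewrite sub0r sqrrN lndivp ?exprn_gt0 // lnXn // mulr2n; lra.
have [dl dl0 Hdl] := core fin c0 cb hK npm sym.
apply: (@lt_le_trans _ _ dl%:E); first by rewrite lte_fin.
apply: le_ereal_inf_tmp => _ [w _ <-].
apply: le_trans (Hdl (w - a)) _.
rewrite le_eqVlt; apply/orP; left; apply/eqP.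
apply: eq_integral => x _; congr EFin.
rewrite !sqr_sqrtr ?addr_ge0 ?sqr_ge0 //.
have X0 : 0 < (w - a - q x) ^+ 2 + c ^+ 2.
  by have := sqr_ge0 (w - a - q x); have := exprn_gt0 2 c0; lra.
have Y0 : 0 < (w - a) ^+ 2 + b ^+ 2.
  by have := sqr_ge0 (w - a); have := exprn_gt0 2 b0; lra.
have -> : r2 * ((w + a / r2 - (q x - En)) ^+ 2 + (0 - c - 0) ^+ 2) /
     ((w - a) ^+ 2 + (0 - b) ^+ 2) =
     (b / c) * ((w - a - q x) ^+ 2 + c ^+ 2) / ((w - a) ^+ 2 + b ^+ 2).
  rewrite eEn /c; field; apply/andP; split; [| apply/andP; split]; apply: lt0r_neq0 => //.
have bc0 : 0 < b / c by rewrite divr_gt0.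
rewrite /hF lndivp; [|exact: mulr_gt0|done].
rewrite lnMp // lndivp //; lra.
Qed.
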